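(* In the setting of the context, fix $\beta>0$. Then $\omega\in\overline{W_{\overline{\mathbb{R}}\times\{\beta\}}(T)\setminus i\mathbb{R}}$ if and only if $\omega\in\{0,\infty\}$ (only $\omega=\infty$ if $c=0$), or $\omega_\Im\neq0$ and one of the following four equations holds: $$\omega_\Re=\pm\sqrt{P_{\omega_\Im}\pm\sqrt{P_{\omega_\Im}^2-Q_{\omega_\Im}}-\omega_\Im^2},$$ where $$P_{\omega_\Im}:=c-\frac{d^2}{2}-d\omega_\Im-\frac{\beta d}{4\omega_\Im},\qquad Q_{\omega_\Im}:=\beta c+c^2+2cd\omega_\Im+4c\omega_\Im^2.$$
   Context: Let $c\ge0$, $d>0$, $\delta_\pm:=\pm\sqrt{c-d^2/4}-id/2$; $\sqrt{\cdot}$ is the principal square root. For real $\alpha,\beta$ let $p_{(\alpha,\beta)}(\omega):=(\alpha-\omega^2)(c-id\omega-\omega^2)-\beta\omega^2$ with roots $r_1,\dots,r_4$ labelled continuously in $(\alpha,\beta)\in\mathbb{R}^2$ and extended by limits to $\alpha=\pm\infty$ (roots $\delta_+,\delta_-$ and $\infty$ twice), values in $\overline{\mathbb{C}}$. $W_{\overline{\mathbb{R}}\times\{\beta\}}(T):=\bigcup_{n=1}^4\{r_n(\alpha,\beta):\alpha\in\mathbb{R}\cup\{\pm\infty\}\}$; overline denotes closure in $\overline{\mathbb{C}}$; $\omega=\omega_\Re+i\omega_\Im$. *)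

(* Defs.v *)
From HB Require Import structures.
From mathcomp Require Import all_boot all_order all_algebra.
From mathcomp Require Import complex.
From mathcomp Require Import reals.
Set Implicit Arguments. Unset Strict Implicit. Unset Printing Implicit Defensive.
Import Order.TTheory GRing.Theory Num.Theory.
Local Open Scope ring_scope.
Local Open Scope complex_scope.

(* The extended complex plane: None is the point at infinity. *)
Definition extC (R : rcfType) := option R[i].

Definition pab (R : rcfType) (c d alpha beta : R) (w : R[i]) : R[i] :=
  (alpha%:C - w ^+ 2) * (c%:C - 'i * d%:C * w - w ^+ 2) - beta%:C * w ^+ 2.

Definition delta_p (R : rcfType) (c d : R) : R[i] :=
  sqrtc ((c - d ^+ 2 / 4%:R)%:C) - 'i * (d / 2%:R)%:C.
Definition delta_m (R : rcfType) (c d : R) : R[i] :=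
  - sqrtc ((c - d ^+ 2 / 4%:R)%:C) - 'i * (d / 2%:R)%:C.

(* W_{Rbar x {beta}}(T): union over alpha in R u {+oo,-oo} of all the roots
   r_1..r_4 of p_(alpha,beta), as a subset of the extended complex plane.
   For real alpha these are exactly the zeros of p_(alpha,beta); at
   alpha = +/-oo the (limit) roots are delta_+, delta_- and oo. *)
Definition W_beta (R : rcfType) (c d beta : R) : extC R -> Prop :=
  fun z => match z with
  | None => True
  | Some w => (exists alpha : R, pab c d alpha beta w = 0)
              \/ w = delta_p c d \/ w = delta_m c d
  end.

Definition reC (R : rcfType) (w : R[i]) : R := complex.Re w.
Definition imC (R : rcfType) (w : R[i]) : R := complex.Im w.

(* S \ iR  (the point oo does not lie on iR) *)
Definition minus_iR (R : rcfType) (S : extC R -> Prop) : extC R -> Prop :=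
  fun z => match z with
  | None => S None
  | Some w => S (Some w) /\ reC w != 0
  end.

Definition extC_closure (R : rcfType) (S : extC R -> Prop) : extC R -> Prop :=
  fun z => match z with
  | None => S None \/
            (forall M : R, exists w : R[i], S (Some w) /\ M%:C < `|w|)
  | Some w0 => forall e : R, 0 < e ->
            exists w : R[i], S (Some w) /\ `|w - w0| < e%:C
  end.

Definition Pfun (R : rcfType) (c d beta y : R) : R :=
  c - d ^+ 2 / 2%:R - d * y - beta * d / (4%:R * y).
Definition Qfun (R : rcfType) (c d beta y : R) : R :=
  beta * c + c ^+ 2 + 2%:R * c * d * y + 4%:R * c * y ^+ 2.

Definition sgnb (R : rcfType) (b : bool) : R[i] := if b then 1 else -1.

(* Main.v *)
Require Import Defs.
From HB Require Import structures.
From mathcomp Require Import all_boot all_order all_algebra.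
From mathcomp Require Import complex.
From mathcomp Require Import reals.
From mathcomp Require Import ring lra polyrcf.
Import Order.TTheory GRing.Theory Num.Theory.
Set Implicit Arguments. Unset Strict Implicit. Unset Printing Implicit Defensive.
Local Open Scope ring_scope.
Local Open Scope complex_scope.

Section Cplx.
Variable R : rcfType.
Local Notation Re := (@complex.Re R).
Local Notation Im := (@complex.Im R).
Implicit Types (a b : R[i]).
Lemma ReM a b : Re (a * b) = Re a * Re b - Im a * Im b.
Proof. by case: a => ? ?; case: b => ? ? /=. Qed.
Lemma ImM a b : Im (a * b) = Re a * Im b + Im a * Re b.
Proof. by case: a => ? ?; case: b => ? ? /=. Qed.
Lemma ReD a b : Re (a + b) = Re a + Re b.
Proof. by case: a => ? ?; case: b => ? ? /=. Qed.
Lemma ImD a b : Im (a + b) = Im a + Im b.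
Proof. by case: a => ? ?; case: b => ? ? /=. Qed.
Lemma ReN a : Re (- a) = - Re a.
Proof. by case: a => ? ?. Qed.
Lemma ImN a : Im (- a) = - Im a.
Proof. by case: a => ? ?. Qed.
Lemma ReC (r : R) : Re (r%:C) = r. Proof. by []. Qed.
Lemma ImC (r : R) : Im (r%:C) = 0. Proof. by []. Qed.
Lemma Rei : Re ('i : R[i]) = 0. Proof. by []. Qed.
Lemma Imi : Im ('i : R[i]) = 1. Proof. by []. Qed.
Lemma ReX2 a : Re (a ^+ 2) = Re a ^+ 2 - Im a ^+ 2.
Proof. by rewrite expr2 ReM !expr2. Qed.
Lemma ImX2 a : Im (a ^+ 2) = 2%:R * Re a * Im a.
Proof. by rewrite expr2 ImM; ring. Qed.
Lemma Re0 : Re (0 : R[i]) = 0. Proof. by []. Qed.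
Lemma Im0 : Im (0 : R[i]) = 0. Proof. by []. Qed.
Lemma Re1 : Re (1 : R[i]) = 1. Proof. by []. Qed.
Lemma Im1 : Im (1 : R[i]) = 0. Proof. by []. Qed.
Lemma cplx_eq a b : Re a = Re b -> Im a = Im b -> a = b.
Proof. by case: a => ? ?; case: b => ? ? /= -> ->. Qed.
Lemma ReCx (x y : R) : Re (x +i* y) = x. Proof. by []. Qed.
Lemma ImCx (x y : R) : Im (x +i* y) = y. Proof. by []. Qed.
End Cplx.
Definition ReIm := (ReM, ImM, ReD, ImD, ReN, ImN, ReC, ImC, Rei, Imi, ReX2, ImX2, Re0, Im0, Re1, Im1, ReCx, ImCx).
Ltac cnorm := rewrite ?ReIm /= ?(mul0r, mulr0, mul1r, mulr1, subr0, add0r, addr0, sub0r, oppr0).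

Section Cont.
Variable R : rcfType.
Definition cont2 (f : R -> R -> R) (x0 y0 : R) := forall e, 0 < e ->
  exists2 dl, 0 < dl & forall x y, `|x - x0| < dl -> `|y - y0| < dl ->
    `|f x y - f x0 y0| < e.

Lemma cont2_c (k : R) x0 y0 : cont2 (fun _ _ => k) x0 y0.
Proof. by move=> e he; exists 1 => // x y _ _; rewrite subrr normr0. Qed.
Lemma cont2_x x0 y0 : cont2 (fun x _ => x) x0 y0.
Proof. by move=> e he; exists e. Qed.
Lemma cont2_y x0 y0 : cont2 (fun _ y => y) x0 y0.
Proof. by move=> e he; exists e. Qed.
Lemma cont2_N f x0 y0 : cont2 f x0 y0 -> cont2 (fun x y => - f x y) x0 y0.
Proof.
move=> hf e he; have [dl hdl H] := hf e he; exists dl => // x y hx hy.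
by rewrite -opprD normrN; apply: H.
Qed.
Lemma cont2_D f g x0 y0 : cont2 f x0 y0 -> cont2 g x0 y0 ->
  cont2 (fun x y => f x y + g x y) x0 y0.
Proof.
move=> hf hg e he.
have he2 : 0 < e / 2%:R by rewrite divr_gt0 // ltr0n.
have [d1 hd1 H1] := hf _ he2; have [d2 hd2 H2] := hg _ he2.
exists (Num.min d1 d2); first by rewrite lt_min hd1 hd2.
move=> x y; rewrite !lt_min => /andP[hx1 hx2] /andP[hy1 hy2].
have := H1 _ _ hx1 hy1; have := H2 _ _ hx2 hy2.
set a := f x y - f x0 y0; set b := g x y - g x0 y0 => hb ha.
rewrite (_ : _ - _ = a + b); last by rewrite /a /b; ring.
apply: (le_lt_trans (ler_normD _ _)); lra.
Qed.
Lemma cont2_M f g x0 y0 : cont2 f x0 y0 -> cont2 g x0 y0 ->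
  cont2 (fun x y => f x y * g x y) x0 y0.
Proof.
move=> hf hg e he.
set A := `|f x0 y0|; set B := `|g x0 y0|.
have hAB : 0 < 1 + A + B by rewrite /A /B; apply: (lt_le_trans ltr01); rewrite -addrA lerDl addr_ge0.
set eta := Num.min 1 (e / (2%:R * (1 + A + B))).
have heta : 0 < eta by rewrite lt_min ltr01 /= divr_gt0 // mulr_gt0 // ltr0n.
have heta1 : eta <= 1 by rewrite ge_min lexx.
have heta2 : eta * (1 + A + B) <= e / 2%:R.
  have : eta <= e / (2%:R * (1 + A + B)) by rewrite ge_min lexx orbT.
  rewrite ler_pdivlMr ?mulr_gt0 ?ltr0n // => h.
  rewrite ler_pdivlMr ?ltr0n //; apply: le_trans h; rewrite le_eqVlt; apply/orP; left; apply/eqP; ring.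
have [d1 hd1 H1] := hf _ heta; have [d2 hd2 H2] := hg _ heta.
exists (Num.min d1 d2); first by rewrite lt_min hd1 hd2.
move=> x y; rewrite !lt_min => /andP[hx1 hx2] /andP[hy1 hy2].
have := H1 _ _ hx1 hy1; have := H2 _ _ hx2 hy2.
set a := f x y - f x0 y0; set b := g x y - g x0 y0 => hb ha.
rewrite (_ : _ - _ = a * b + f x0 y0 * b + g x0 y0 * a); last by rewrite /a /b; ring.
apply: (le_lt_trans (ler_normD _ _)); apply: (le_lt_trans (lerD (ler_normD _ _) (lexx _))).
rewrite !normrM -/A -/B.
have h0a := normr_ge0 a; have h0b := normr_ge0 b.
have h0A : 0 <= A by apply: normr_ge0.
have h0B : 0 <= B by apply: normr_ge0.
have hab : `|a| * `|b| <= eta by nra.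
have hAb : A * `|b| <= A * eta by nra.
have hBa : B * `|a| <= B * eta by nra.
nra.
Qed.
Lemma cont2_X2 f x0 y0 : cont2 f x0 y0 -> cont2 (fun x y => f x y ^+ 2) x0 y0.
Proof.
move=> hf e he; have [dl hdl H] := cont2_M hf hf he.
by exists dl => // x y hx hy; rewrite !expr2; apply: H.
Qed.
End Cont.

Ltac cont_tac := repeat first [apply: cont2_D | apply: cont2_N | apply: cont2_M
   | apply: cont2_X2 | apply: cont2_x | apply: cont2_y | apply: cont2_c].


Section Main.
Variables (R : rcfType) (c d be : R).
Local Notation Re := (@complex.Re R).
Local Notation Im := (@complex.Im R).

Definition sf (y : R) := c + d * y + y ^+ 2.
Definition af (y : R) := d + 2%:R * y.
Definition Fu (u y : R) := 2%:R * y * ((sf y - u) ^+ 2 + u * af y ^+ 2)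
   + be * (2%:R * c * y + d * (u + y ^+ 2)).
Definition Lf (y : R) := 2%:R * y * (af y ^+ 2 - 2%:R * sf y) + be * d.
Definition K2f (y : R) := 2%:R * sf y ^+ 2 + be * (2%:R * c + d * y).
Definition Zf (y : R) := y * K2f y.

Lemma Fu_expand u y : Fu u y = 2%:R * y * u ^+ 2 + Lf y * u + Zf y.
Proof. rewrite /Fu /Lf /Zf /K2f /sf /af; ring. Qed.

Lemma Fu0 y : Fu 0 y = Zf y.
Proof. by rewrite Fu_expand; ring. Qed.

Lemma pab_Re al x y : Re (pab c d al be (x +i* y)) =
  (al - (x^+2 - y^+2)) * (c + d * y - (x^+2 - y^+2)) + 2%:R*x*y * (- d * x - 2%:R * x * y) - be * (x^+2 - y^+2).
Proof. rewrite /pab; cnorm. ring. Qed.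
Lemma pab_Im al x y : Im (pab c d al be (x +i* y)) =
  (al - (x^+2 - y^+2)) * (- d * x - 2%:R * x * y) - 2%:R*x*y * (c + d * y - (x^+2 - y^+2)) - be * (2%:R * x * y).
Proof. rewrite /pab; cnorm. ring. Qed.

Lemma pab_elim al x y :
  (- d * x - 2%:R * x * y) * Re (pab c d al be (x +i* y))
  - (c + d * y - (x^+2 - y^+2)) * Im (pab c d al be (x +i* y)) = x * Fu (x ^+ 2) y.
Proof. rewrite pab_Re pab_Im /Fu /sf /af; ring. Qed.


Lemma W_to_F (hd : 0 < d) (hb : 0 < be) w : Re w != 0 ->
  W_beta c d be (Some w) -> Fu (Re w ^+ 2) (Im w) = 0.
Proof.
case: w => x y /= hx [[al hal]|hpm].
  have := pab_elim al x y; rewrite hal Re0 Im0 !mulr0 subrr => /esym/eqP.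
  by rewrite mulf_eq0 (negbTE hx) /= => /eqP.
rewrite /delta_p /delta_m in hpm.
have hS := sqr_sqrtc ((c - d^+2/4%:R)%:C).
set S := sqrtc _ in hS hpm; clearbody S.
have h1 := congr1 Re hS; have h2 := congr1 Im hS.
rewrite ReX2 ReC in h1; rewrite ImX2 ImC in h2.
have [ex ey] : (x = Re S \/ x = - Re S) /\ (y = (Im S - d / 2%:R) \/ y = (- Im S - d / 2%:R)).
  case: hpm => h; have hr := congr1 Re h; have hi := congr1 Im h;
  move: hr hi; cnorm; [by move=> ? ?; split; left | by move=> ? ?; split; right].
have hRS : Re S != 0 by move: hx; case: ex => ->; rewrite ?oppr_eq0.
have hIS : Im S = 0.
  move: h2 => /eqP; rewrite -mulrA mulf_eq0 pnatr_eq0 /= mulf_eq0 (negbTE hRS) /=.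
  by move/eqP.
have hy : y = - (d / 2%:R) by case: ey => ->; rewrite hIS; ring.
have hx2 : x ^+ 2 = c - d^+2/4%:R.
  by case: ex => ->; rewrite ?sqrrN -h1 hIS; ring.
rewrite hx2 hy /Fu /sf /af; by field.
Qed.

Lemma F_to_W (hd : 0 < d) w : Re w != 0 -> Fu (Re w ^+ 2) (Im w) = 0 ->
  W_beta c d be (Some w).
Proof.
case: w => x y /= hx hF.
set A := c + d*y - (x^+2 - y^+2).
set B := - d * x - 2%:R * x * y.
have [hN|hN] := eqVneq (A^+2 + B^+2) 0.
  have hA : A = 0.
    apply/eqP; rewrite -sqrf_eq0; apply/eqP.
    apply: le_anti; rewrite sqr_ge0 andbT -hN lerDl sqr_ge0 //.
  have hB : B = 0.
    apply/eqP; rewrite -sqrf_eq0; apply/eqP.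
    apply: le_anti; rewrite sqr_ge0 andbT -hN lerDr sqr_ge0 //.
  have hy : y = - (d / 2%:R).
    have : x * (d + 2%:R * y) = 0 by rewrite -[LHS]opprK -[0]oppr0 -hB /B; congr (- _); ring.
    move/eqP; rewrite mulf_eq0 (negbTE hx) /= => /eqP h.
    have -> : y = (d + 2%:R * y) / 2%:R - d / 2%:R by field.
    by rewrite h; ring.
  have hx2 : c - d^+2/4%:R = x ^+ 2.
    have : A = 0 := hA. rewrite /A hy => h.
    rewrite -[LHS]subr0 -h; by field.
  right.
  have hsq : sqrtc ((c - d ^+ 2 / 4%:R)%:C) = (`|x|)%:C.
    by rewrite hx2 sqrtc_sqrtr ?lecR ?sqr_ge0 //= sqrtr_sqr.
  have [xn|xp] := lerP x 0.
    have xn' : x < 0 by rewrite lt_neqAle xn andbT.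
    right; rewrite /delta_m hsq ltr0_norm //.
    by rewrite hy; congr (_ +i* _); cnorm; ring.
  left; rewrite /delta_p hsq gtr0_norm //.
  by rewrite hy; congr (_ +i* _); cnorm; ring.
left; exists (x^+2 - y^+2 + be * ((x^+2-y^+2)*A + 2%:R*x*y*B)/(A^+2+B^+2)).
apply: (@cplx_eq R); rewrite ?pab_Re ?pab_Im ?Re0 ?Im0.
  transitivity (B * (x * Fu (x^+2) y) / (A^+2+B^+2)); last by rewrite hF !mulr0 mul0r.
  rewrite /Fu /sf /af /A /B; field => //.
transitivity (- A * (x * Fu (x^+2) y) / (A^+2+B^+2)); last by rewrite hF !mulr0 mul0r.
rewrite /Fu /sf /af /A /B; field => //.
Qed.


Lemma Fu_PQ (u y : R) : y != 0 -> Fu u y = 2%:R * y *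
  ((u + y^+2)^+2 - 2%:R * Pfun c d be y * (u + y^+2) + Qfun c d be y).
Proof. move=> hy; rewrite /Fu /sf /af /Pfun /Qfun; by field. Qed.

Lemma sgnb_sq (b : bool) : sgnb R b ^+ 2 = 1.
Proof. by case: b; rewrite /sgnb ?expr1n ?sqrrN ?expr1n. Qed.

Lemma sgnb_abs (r : R) : sgnb R (0 <= r) * (`|r|)%:C = r%:C.
Proof.
have [h|h] := lerP 0 r; rewrite /sgnb.
  by rewrite ger0_norm // mul1r.
by rewrite ltr0_norm //; apply: cplx_eq; cnorm; ring.
Qed.

Lemma sqrtc_sq (r : R) : sqrtc ((r^+2)%:C) = (`|r|)%:C.
Proof. by rewrite sqrtc_sqrtr ?lecR ?sqr_ge0 // ReC sqrtr_sqr. Qed.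

Lemma form_iff (w : R[i]) : imC w != 0 ->
  (exists s1 s2 : bool,
          (reC w)%:C =
          sgnb R s1 * sqrtc ((Pfun c d be (imC w))%:C
             + sgnb R s2 * sqrtc ((Pfun c d be (imC w) ^+ 2
                                   - Qfun c d be (imC w))%:C)
             - (imC w ^+ 2)%:C))
  <-> Fu (reC w ^+ 2) (imC w) = 0.
Proof.
rewrite /reC /imC; case: w => x y; rewrite !ReCx !ImCx => hy.
set P := Pfun c d be y; set Q := Qfun c d be y.
split.
  move=> [s1 [s2 h]].
  have hS := sqr_sqrtc ((P ^+ 2 - Q)%:C).
  set S := sqrtc _ in hS h; clearbody S.
  have e1 : (x%:C)^+2 = P%:C + sgnb R s2 * S - (y^+2)%:C.
    by rewrite h exprMn sgnb_sq sqr_sqrtc mul1r.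
  have h1 := congr1 Re hS; have h2 := congr1 Im hS.
  have e1r := congr1 Re e1; have e1i := congr1 Im e1.
  clear h; move: e1 => _; move: h1 h2 e1r e1i; rewrite /sgnb; case: s2; cnorm => h1 h2 e1r e1i.
    have hI : Im S = 0 by lra.
    have ev : x^+2 + y^+2 = P + Re S by lra.
    rewrite Fu_PQ // ev.
    rewrite (_ : (P + Re S) ^+ 2 - 2%:R * P * (P + Re S) + Q =
                 (Re S ^+ 2 - Im S ^+ 2) - (P^+2 - Q)); last by rewrite hI; ring.
    by rewrite h1 subrr mulr0.
  have hI : Im S = 0 by lra.
  have ev : x^+2 + y^+2 = P - Re S by lra.
  rewrite Fu_PQ // ev.
  rewrite (_ : (P - Re S) ^+ 2 - 2%:R * P * (P - Re S) + Q =
               (Re S ^+ 2 - Im S ^+ 2) - (P^+2 - Q)); last by rewrite hI; ring.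
  by rewrite h1 subrr mulr0.
move=> hF.
have hq : P^+2 - Q = (x^+2 + y^+2 - P)^+2.
  move: hF; rewrite Fu_PQ // => /eqP; rewrite mulf_eq0 mulf_eq0 pnatr_eq0 (negbTE hy) /=.
  move=> /eqP h; rewrite -/P -/Q in h.
  have : (x^+2+y^+2-P)^+2 - (P^+2-Q) = 0 by rewrite -h; ring.
  by move/eqP; rewrite subr_eq0 => /eqP ->.
exists (0 <= x), (0 <= x^+2 + y^+2 - P).
rewrite hq sqrtc_sq sgnb_abs.
rewrite (_ : P%:C + (x ^+ 2 + y ^+ 2 - P)%:C - (y ^+ 2)%:C = (x^+2)%:C); last first.
  by apply: cplx_eq; cnorm; ring.
by rewrite sqrtc_sq sgnb_abs.
Qed.


Lemma sign_neg (a b k : R) : a * k < 0 -> 0 < k * b -> a * b < 0.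
Proof.
move=> h1 h2; rewrite ltNge; apply/negP => h.
have h3 : 0 <= a * b * (k * k) by apply: mulr_ge0 => //; rewrite -expr2 sqr_ge0.
have : a * b * (k * k) = (a * k) * (k * b) by ring.
have := mulr_lt0 (a * k) (k * b). nra.
Qed.

Lemma sign_pos (a b k : R) : 0 < a * k -> 0 < b * k -> 0 < a * b.
Proof.
move=> h1 h2; rewrite ltNge; apply/negP => h.
have h3 : a * b * (k * k) <= 0 by rewrite mulr_le0_ge0 // -expr2 sqr_ge0.
have : a * b * (k * k) = (a * k) * (b * k) by ring.
have := mulr_gt0 h1 h2. nra.
Qed.

Lemma nK (x : R) : `|x| ^+ 2 = x ^+ 2.
Proof. exact: real_normK (num_real x). Qed.

Lemma cont1 (g : R -> R) y0 : cont2 (fun _ y => g y) 0 y0 ->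
  forall e, 0 < e -> exists2 dl, 0 < dl & forall y, `|y - y0| < dl -> `|g y - g y0| < e.
Proof.
move=> hg e he; have [dl hdl H] := hg e he; exists dl => // y hy.
by apply: (H 0 y) => //; rewrite subrr normr0.
Qed.

Lemma cont_Fu x0 y0 : cont2 (fun x y => Fu (x^+2) y) x0 y0.
Proof. rewrite /Fu /sf /af; cont_tac. Qed.
Lemma cont_Lf y0 : cont2 (fun _ y => Lf y) 0 y0.
Proof. rewrite /Lf /sf /af; cont_tac. Qed.
Lemma cont_Zf y0 : cont2 (fun _ y => Zf y) 0 y0.
Proof. rewrite /Zf /K2f /sf /af; cont_tac. Qed.
Lemma cont_K2f y0 : cont2 (fun _ y => K2f y) 0 y0.
Proof. rewrite /K2f /sf /af; cont_tac. Qed.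

Lemma closure_F x0 y0 : (forall e, 0 < e -> exists x y,
   [/\ x != 0, Fu (x^+2) y = 0, `|x - x0| < e & `|y - y0| < e]) ->
  Fu (x0^+2) y0 = 0.
Proof.
move=> H; apply/eqP; apply/negPn/negP => hne.
have he : 0 < `|Fu (x0^+2) y0| by rewrite normr_gt0.
have [dl hdl Hc] := cont_Fu x0 y0 he.
have [x [y [hx hF hxd hyd]]] := H dl hdl.
by have := Hc x y hxd hyd; rewrite hF sub0r normrN ltxx.
Qed.

Lemma c0_excl (hc0 : c = 0) (hd : 0 < d) (hb : 0 < be) :
  exists2 e, 0 < e & forall x y, `|x| < e -> `|y| < e -> x != 0 -> Fu (x^+2) y != 0.
Proof.
set M := 3%:R * d^+2 + 3%:R + (d + 2%:R)^+2.
have hM : 0 < M by rewrite /M; nra.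
have hbd : 0 < be * d by nra.
exists (Num.min 1 (be * d / (2%:R * M))).
  by rewrite lt_min ltr01 /= divr_gt0 // mulr_gt0 // ltr0n.
move=> x y; rewrite !lt_min => /andP[hx1 hx2] /andP[hy1 hy2] hx0.
have hyM : 2%:R * `|y| * M < be * d.
  by move: hy2; rewrite ltr_pdivlMr ?mulr_gt0 ?ltr0n // => h; rewrite -mulrA mulrC -mulrA [M * _]mulrC.
set u := x ^+ 2.
have hu0 : 0 < u by rewrite /u exprn_even_gt0.
have hu1 : u < 1 by rewrite /u -nK; have := normr_ge0 x; nra.
have hy2' : y ^+ 2 <= 1 by rewrite -nK; have := normr_ge0 y; nra.
have hyn := normr_ge0 y.
have hyy : - `|y| <= y <= `|y| by rewrite -ler_norml.
set T := (sf y - u) ^+ 2 + u * af y ^+ 2.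
have hT0 : 0 <= T by rewrite /T addr_ge0 ?sqr_ge0 // mulr_ge0 ?sqr_ge0 // ltW.
have haf : af y ^+ 2 <= (d + 2%:R) ^+ 2.
  rewrite /af -(nK (d + 2%:R * y)) -(nK (d + 2%:R)).
  have h1 : `|d + 2%:R * y| <= d + 2%:R.
    rewrite ler_norml; apply/andP; split; nra.
  have h2 : 0 <= `|d + 2%:R * y| := normr_ge0 _.
  rewrite (ger0_norm (x := d + 2%:R)); last by nra.
  nra.
have hsf : (sf y - u) ^+ 2 <= 3%:R * (d^+2 * y^+2 + y^+2 + u).
  rewrite /sf hc0 add0r.
  have h1 : (d * y + y ^+ 2 - u) ^+ 2 <= 3%:R * ((d*y)^+2 + (y^+2)^+2 + u^+2).
    clear -R; move: (d * y) (y ^+ 2) u => a b w.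
    have := sqr_ge0 (a - b); have := sqr_ge0 (a + w); have := sqr_ge0 (b + w); nra.
  have h2 : (y^+2)^+2 <= y^+2 by nra.
  have h3 : u^+2 <= u by nra.
  by apply: (le_trans h1); rewrite exprMn; nra.
have hT : T <= M * (u + y^+2).
  rewrite /T /M.
  have : u * af y ^+ 2 <= u * (d + 2%:R)^+2 by rewrite ler_pM2l.
  nra.
have hF : Fu u y = 2%:R * y * T + be * d * (u + y^+2).
  by rewrite /Fu /T hc0; ring.
rewrite hF; apply: lt0r_neq0.
have hpos : 0 < u + y^+2 by have := sqr_ge0 y; lra.
have e1 : 0 <= (`|y| + y) * T by apply: mulr_ge0 => //; lra.
have e2 : 0 <= `|y| * (M * (u + y^+2) - T) by apply: mulr_ge0 => //; lra.
have e3 : 0 < (be * d - 2%:R * `|y| * M) * (u + y^+2) by apply: mulr_gt0 => //; lra.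
nra.
Qed.

Lemma root_from y u1 e : 0 < e -> 0 < u1 -> u1 <= e^+2 / 4%:R ->
  Zf y * (2%:R * y * u1^+2 + Lf y * u1 + Zf y) < 0 ->
  exists x, [/\ x != 0, Fu (x^+2) y = 0 & `|x| < e].
Proof.
move=> he hu1 hu1e hsg.
pose p : {poly R} := (2%:R*y)%:P * 'X^2 + (Lf y)%:P * 'X + (Zf y)%:P.
have hp u : p.[u] = Fu u y.
  by rewrite /p !hornerD !hornerCM hornerXn hornerX hornerC Fu_expand; ring.
have hsg' : p.[0] * p.[u1] < 0 by rewrite !hp Fu0 Fu_expand.
have [u hu hr] := poly_ivtoo (ltW hu1) hsg'.
move: hu; rewrite in_itv /= => /andP[hu0 hu1'].
have hs := sqr_sqrtr (ltW hu0).
have hs0 := sqrtr_ge0 u.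
exists (Num.sqrt u); split.
- by rewrite gt_eqF // sqrtr_gt0.
- by rewrite hs -hp; apply/eqP.
- rewrite ger0_norm //.
  have : Num.sqrt u ^+ 2 < e ^+ 2 by rewrite hs; nra.
  nra.
Qed.

Lemma RL1 y0 e : 0 < e -> Lf y0 != 0 -> Zf y0 = 0 ->
  (forall dl, 0 < dl -> exists y, `|y - y0| < dl /\ Zf y * Lf y0 < 0) ->
  exists x y, [/\ x != 0, Fu (x^+2) y = 0, `|x| < e & `|y - y0| < e].
Proof.
move=> he hL hZ hs.
set L0 := Lf y0; set m := `|L0|.
have hm : 0 < m by rewrite normr_gt0.
have hy0 := normr_ge0 y0.
set u1 := Num.min (e^+2/4%:R) (m / (16%:R * (`|y0| + 1))).
have hu1 : 0 < u1.
  by rewrite lt_min !divr_gt0 ?exprn_gt0 ?ltr0n // mulr_gt0 ?ltr0n //; lra.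
have hu1e : u1 <= e^+2/4%:R by rewrite ge_min lexx.
have hu1m : u1 * (16%:R * (`|y0| + 1)) <= m.
  have : u1 <= m / (16%:R * (`|y0| + 1)) by rewrite ge_min lexx orbT.
  by rewrite ler_pdivlMr // mulr_gt0 ?ltr0n //; lra.
have hm4 : 0 < m / 4%:R by rewrite divr_gt0 ?ltr0n.
have [dL hdL HL] := cont1 (cont_Lf y0) hm4.
have hum4 : 0 < u1 * m / 4%:R by rewrite divr_gt0 ?ltr0n // mulr_gt0.
have [dZ hdZ HZ] := cont1 (cont_Zf y0) hum4.
set dl := Num.min 1 (Num.min e (Num.min dL dZ)).
have hdl : 0 < dl by rewrite !lt_min ltr01 he hdL hdZ.
have [y [hy hsg]] := hs dl hdl.
move: (hy); rewrite !lt_min => /and4P[hy1 hye hyL hyZ].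
have hLy := HL y hyL; have hZy := HZ y hyZ; rewrite hZ subr0 -/L0 in hZy hLy.
have hyb : `|y| <= `|y0| + 1.
  have := ler_normD (y - y0) y0; rewrite subrK; lra.
set A := Lf y - L0.
have eP : 2%:R * y * u1^+2 + Lf y * u1 + Zf y = u1 * L0 + u1 * A + 2%:R * y * u1^+2 + Zf y.
  by rewrite /A; ring.
have key : 0 < L0 * (2%:R * y * u1^+2 + Lf y * u1 + Zf y).
  rewrite eP.
  have hm2 : L0 * L0 = m * m by rewrite /m -!expr2 nK.
  have b1 : - (L0 * A) <= `|A| * m by rewrite [X in _ <= X]mulrC /m -normrM -normrN ler_norm.
  have b2 : - (L0 * y) <= `|y| * m by rewrite [X in _ <= X]mulrC /m -normrM -normrN ler_norm.
  have b3 : - (L0 * Zf y) <= `|Zf y| * m by rewrite [X in _ <= X]mulrC /m -normrM -normrN ler_norm.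
  have hA0 := normr_ge0 A; have hZ0 := normr_ge0 (Zf y); have hyn := normr_ge0 y.
  have c1 : u1 * (`|A| * m) <= u1 * (m / 4%:R * m).
    by rewrite ler_pM2l // ler_pM2r // ltW.
  have c2 : u1^+2 * (`|y| * m) <= u1 * (m / 16%:R * m).
    have : `|y| * u1 <= m / 16%:R.
      rewrite ler_pdivlMr ?ltr0n //; nra.
    nra.
  have c3 : `|Zf y| * m <= u1 * (m / 4%:R * m).
    nra.
  have : u1 * (m / 4%:R * m) + 2%:R * (u1 * (m / 16%:R * m)) + u1 * (m / 4%:R * m) < u1 * (m * m).
    have := mulr_gt0 hu1 (mulr_gt0 hm hm); nra.
  nra.
have hneg : Zf y * (2%:R * y * u1^+2 + Lf y * u1 + Zf y) < 0 by apply: (sign_neg hsg key).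
have [x [hx0 hF hxe]] := root_from he hu1 hu1e hneg.
by exists x, y; split.
Qed.


Lemma RL2 y0 e : 0 < e -> y0 < 0 -> Lf y0 = 0 -> Zf y0 = 0 ->
  (forall dl, 0 < dl -> exists y, `|y - y0| < dl /\ 0 < Zf y) ->
  exists x y, [/\ x != 0, Fu (x^+2) y = 0, `|x| < e & `|y - y0| < e].
Proof.
move=> he hy0 hL hZ hs.
set m := - y0.
have hm : 0 < m by rewrite /m oppr_gt0.
set u1 := Num.min (e^+2/4%:R) 1.
have hu1 : 0 < u1 by rewrite lt_min ltr01 andbT !divr_gt0 ?exprn_gt0 ?ltr0n.
have hu1e : u1 <= e^+2/4%:R by rewrite ge_min lexx.
have hm4 : 0 < m * u1 / 4%:R by rewrite divr_gt0 ?ltr0n // mulr_gt0.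
have [dL hdL HL] := cont1 (cont_Lf y0) hm4.
have hum4 : 0 < m * u1 ^+ 2 / 4%:R by rewrite divr_gt0 ?ltr0n // mulr_gt0 // exprn_gt0.
have [dZ hdZ HZ] := cont1 (cont_Zf y0) hum4.
set dl := Num.min (m / 2%:R) (Num.min e (Num.min dL dZ)).
have hdl : 0 < dl by rewrite !lt_min he hdL hdZ divr_gt0 ?ltr0n.
have [y [hy hsg]] := hs dl hdl.
move: (hy); rewrite !lt_min => /and4P[hy1 hye hyL hyZ].
have hLy := HL y hyL; have hZy := HZ y hyZ; rewrite hZ subr0 in hZy; rewrite hL subr0 in hLy.
have hyb : y < - (m / 2%:R).
  move: hy1; rewrite ltr_norml => /andP[_ h]; rewrite /m in h *; lra.
have key : 2%:R * y * u1^+2 + Lf y * u1 + Zf y < 0.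
  have b1 : Lf y * u1 <= `|Lf y| * u1 by rewrite ler_pM2r // ler_norm.
  have b2 : Zf y <= `|Zf y| by rewrite ler_norm.
  have b3 : 2%:R * y * u1^+2 <= - m * u1 ^+ 2.
    have hu2 : 0 < u1 ^+ 2 by rewrite exprn_gt0.
    rewrite -mulrA [_ * (y * _)]mulrA; rewrite ler_pM2r //; lra.
  have c1 : `|Lf y| * u1 <= m * u1 / 4%:R * u1 by rewrite ler_pM2r // ltW.
  have hu2 : 0 < u1 ^+ 2 by rewrite exprn_gt0.
  have : m * u1 / 4%:R * u1 = m * u1 ^+2 / 4%:R by rewrite expr2; ring.
  have := mulr_gt0 hm hu2.
  nra.
have hneg : Zf y * (2%:R * y * u1^+2 + Lf y * u1 + Zf y) < 0 by nra.
have [x [hx0 hF hxe]] := root_from he hu1 hu1e hneg.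
by exists x, y; split.
Qed.

Lemma near_sign (g : R -> R) t0 : cont2 (fun _ t => g t) 0 t0 -> g t0 != 0 ->
  exists2 dl, 0 < dl & forall t, `|t - t0| < dl -> 0 < g t * g t0.
Proof.
move=> hg hg0.
have he : 0 < `|g t0| by rewrite normr_gt0.
have [dl hdl H] := cont1 hg he.
exists dl => // t ht; have := H t ht.
have e1 : g t * g t0 = g t0 * g t0 + (g t - g t0) * g t0 by ring.
have e2 : - ((g t - g t0) * g t0) <= `|g t - g t0| * `|g t0| by rewrite -normrM -normrN ler_norm.
have e3 : g t0 * g t0 = `|g t0| * `|g t0| by rewrite -!expr2 nK.
have := normr_ge0 (g t - g t0).
nra.
Qed.

Lemma taylor_sign (tau k1 k2 k3 k4 : R) : tau != 0 ->
  [\/ k1 != 0, (k1 = 0 /\ 0 < tau * k2) | [/\ k1 = 0, k2 = 0 & k3 != 0]] ->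
  forall dl, 0 < dl -> exists h, `|h| < dl /\
     0 < tau * (k1 * h + k2 * h^+2 + k3 * h^+3 + k4 * h^+4).
Proof.
move=> htau hc dl hdl.
case: hc => [hk1|[hk1 hk2]|[hk1 hk2 hk3]].
- pose g := fun h : R => k1 + k2 * h + k3 * h^+2 + k4 * h^+3.
  have hg0 : g 0 = k1 by rewrite /g; ring.
  have [dl' hdl' H] := @near_sign g 0 (ltac:(rewrite /g; cont_tac)) (ltac:(by rewrite hg0)).
  have htk : 0 < `|tau * k1| by rewrite normr_gt0 mulf_neq0.
  set r := Num.min dl dl' / (2%:R * `|tau * k1|).
  have hmin : 0 < Num.min dl dl' by rewrite lt_min hdl hdl'.
  have hr : 0 < r by rewrite divr_gt0 // mulr_gt0 ?ltr0n.
  set h := r * (tau * k1).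
  have hh : `|h| = Num.min dl dl' / 2%:R.
    rewrite /h normrM (gtr0_norm hr) /r; field; by rewrite gt_eqF.
  have hle1 : Num.min dl dl' <= dl by rewrite ge_min lexx.
  have hle2 : Num.min dl dl' <= dl' by rewrite ge_min lexx orbT.
  have hh1 : `|h| < dl by rewrite hh; lra.
  have hh2 : `|h - 0| < dl' by rewrite subr0 hh; lra.
  exists h; split => //.
  have := H h hh2; rewrite hg0 => hgh.
  have e1 : 0 < tau * h * k1.
    rewrite /h (_ : tau * (r * (tau * k1)) * k1 = r * (tau * k1) ^+ 2); last by ring.
    by rewrite mulr_gt0 // exprn_even_gt0 //= mulf_neq0.
  have := sign_pos e1 hgh.
  by rewrite (_ : tau * (k1 * h + k2 * h ^+ 2 + k3 * h ^+ 3 + k4 * h ^+ 4) = tau * h * g h) // /g; ring.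
- pose g := fun h : R => k2 + k3 * h + k4 * h^+2.
  have hg0 : g 0 = k2 by rewrite /g; ring.
  have hk2' : k2 != 0 by apply/negP => /eqP h0; move: hk2; rewrite h0 mulr0 ltxx.
  have [dl' hdl' H] := @near_sign g 0 (ltac:(rewrite /g; cont_tac)) (ltac:(by rewrite hg0)).
  have hmin : 0 < Num.min dl dl' by rewrite lt_min hdl hdl'.
  set h := Num.min dl dl' / 2%:R.
  have hh0 : 0 < h by rewrite divr_gt0 ?ltr0n.
  have hh : `|h| = h by rewrite gtr0_norm.
  have hle1 : Num.min dl dl' <= dl by rewrite ge_min lexx.
  have hle2 : Num.min dl dl' <= dl' by rewrite ge_min lexx orbT.
  have hh1 : `|h| < dl by rewrite hh /h; lra.
  have hh2 : `|h - 0| < dl' by rewrite subr0 hh /h; lra.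
  exists h; split => //.
  have := H h hh2; rewrite hg0 => hgh.
  have e1 : 0 < tau * g h by apply: (sign_pos (k := k2)) => //; rewrite mulrC.
  rewrite (_ : tau * (k1 * h + k2 * h ^+ 2 + k3 * h ^+ 3 + k4 * h ^+ 4) = h ^+ 2 * (tau * g h)); last by rewrite /g hk1; ring.
  by rewrite mulr_gt0 // exprn_gt0.
- pose g := fun h : R => k3 + k4 * h.
  have hg0 : g 0 = k3 by rewrite /g; ring.
  have [dl' hdl' H] := @near_sign g 0 (ltac:(rewrite /g; cont_tac)) (ltac:(by rewrite hg0)).
  have htk : 0 < `|tau * k3| by rewrite normr_gt0 mulf_neq0.
  set r := Num.min dl dl' / (2%:R * `|tau * k3|).
  have hmin : 0 < Num.min dl dl' by rewrite lt_min hdl hdl'.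
  have hr : 0 < r by rewrite divr_gt0 // mulr_gt0 ?ltr0n.
  set h := r * (tau * k3).
  have hh : `|h| = Num.min dl dl' / 2%:R.
    rewrite /h normrM (gtr0_norm hr) /r; field; by rewrite gt_eqF.
  have hle1 : Num.min dl dl' <= dl by rewrite ge_min lexx.
  have hle2 : Num.min dl dl' <= dl' by rewrite ge_min lexx orbT.
  have hh1 : `|h| < dl by rewrite hh; lra.
  have hh2 : `|h - 0| < dl' by rewrite subr0 hh; lra.
  exists h; split => //.
  have := H h hh2; rewrite hg0 => hgh.
  have e1 : 0 < tau * h * k3.
    rewrite /h (_ : tau * (r * (tau * k3)) * k3 = r * (tau * k3) ^+ 2); last by ring.
    by rewrite mulr_gt0 // exprn_even_gt0 //= mulf_neq0.
  have e2 := sign_pos e1 hgh.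
  have hh0 : h != 0 by rewrite -normr_gt0 hh divr_gt0 ?ltr0n.
  rewrite (_ : tau * (k1 * h + k2 * h ^+ 2 + k3 * h ^+ 3 + k4 * h ^+ 4) = h ^+ 2 * (tau * h * g h)); last by rewrite /g hk1 hk2; ring.
  by rewrite mulr_gt0 // exprn_even_gt0.
Qed.


Lemma iR_pts (hc : 0 <= c) (hd : 0 < d) (hb : 0 < be) y0 e : 0 < e -> y0 != 0 -> K2f y0 = 0 ->
  exists x y, [/\ x != 0, Fu (x^+2) y = 0, `|x| < e & `|y - y0| < e].
Proof.
move=> he hy0 hK.
have hy0n : y0 < 0.
  rewrite ltNge; apply/negP => hp.
  have hp' : 0 < y0 by rewrite lt_neqAle eq_sym hy0 hp.
  move: hK; rewrite /K2f => hK.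
  have : 0 < be * (2%:R * c + d * y0) by apply: mulr_gt0 => //; nra.
  have := sqr_ge0 (sf y0). nra.
set s0 := sf y0; set a0 := af y0.
set k1 := 4%:R * s0 * a0 + be * d.
set k2 := 2%:R * (a0 ^+ 2 + 2%:R * s0).
set k3 := 4%:R * a0.
have hT h : K2f (y0 + h) = k1 * h + k2 * h^+2 + k3 * h^+3 + 2%:R * h^+4.
  rewrite -[RHS]add0r -hK /K2f /k1 /k2 /k3 /s0 /a0 /sf /af; ring.
have hZT h : Zf (y0 + h) = (y0 + h) * (k1 * h + k2 * h^+2 + k3 * h^+3 + 2%:R * h^+4).
  by rewrite /Zf hT.
have hrel : k1 = 0 -> y0 * k2 + 3%:R * Lf y0 = 0.
  move=> hk1.
  set t := c + d * y0 / 2%:R.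
  have hid1 : s0 * (d * s0 - 4%:R * a0 * t) = d * K2f y0 / 2%:R - t * k1.
    by rewrite /t /k1 /s0 /a0 /K2f /sf /af; field.
  have hs0 : s0 != 0.
    apply/negP => /eqP h0; move: hk1; rewrite /k1 h0 mulr0 mul0r add0r => /eqP.
    by rewrite mulf_eq0 !gt_eqF.
  have hid2 : d * s0 - 4%:R * a0 * t = 0.
    move: hid1; rewrite hK hk1 !mulr0 !mul0r subr0 => /eqP; rewrite mulf_eq0 (negbTE hs0) /=.
    by move/eqP.
  have hid3 : y0 * k2 + 3%:R * Lf y0 = 4%:R * (d * s0 - 4%:R * a0 * t) + 3%:R * k1.
    by rewrite /t /k1 /k2 /s0 /a0 /Lf /sf /af; field.
  by rewrite hid3 hid2 hk1; ring.
have hyn : 0 < - y0 by rewrite oppr_gt0.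
have [hL|hL] := eqVneq (Lf y0) 0.
- apply: RL2 => //; first by rewrite /Zf hK mulr0.
  move=> dl hdl.
  have hdl' : 0 < Num.min dl (- y0) by rewrite lt_min hdl hyn.
  have hcase : [\/ k1 != 0, (k1 = 0 /\ 0 < -1 * k2) | [/\ k1 = 0, k2 = 0 & k3 != 0]].
    have [hk1|hk1] := eqVneq k1 0; last by apply: Or31.
    apply: Or33; split => //.
      have := hrel hk1; rewrite hL mulr0 addr0 => /eqP; rewrite mulf_eq0 (negbTE hy0) /=.
      by move/eqP.
    rewrite /k3 mulf_neq0 ?pnatr_eq0 //; apply/negP => /eqP ha.
    by move: hk1; rewrite /k1 ha mulr0 add0r => /eqP; rewrite mulf_eq0 !gt_eqF.
  have hm1 : (-1 : R) != 0 by rewrite oppr_eq0 oner_neq0.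
  have [h [hh hpos]] := @taylor_sign (-1) k1 k2 k3 2%:R hm1 hcase _ hdl'.
  exists (y0 + h); split; first by rewrite addrC addKr; move: hh; rewrite lt_min => /andP[].
  have hyneg : y0 + h < 0.
    move: hh; rewrite lt_min => /andP[_]; rewrite ltr_norml => /andP[_ h2]; lra.
  rewrite hZT; nra.
- apply: RL1 => //; first by rewrite /Zf hK mulr0.
  move=> dl hdl.
  have hdl' : 0 < Num.min dl (- y0) by rewrite lt_min hdl hyn.
  have hcase : [\/ k1 != 0, (k1 = 0 /\ 0 < Lf y0 * k2) | [/\ k1 = 0, k2 = 0 & k3 != 0]].
    have [hk1|hk1] := eqVneq k1 0; last by apply: Or31.
    apply: Or32; split => //.
    have := hrel hk1 => h3.
    have : (Lf y0 * k2) * y0 = - 3%:R * (Lf y0 ^+ 2) by rewrite -mulrA [k2 * y0]mulrC; rewrite (_ : y0 * k2 = - (3%:R * Lf y0)); [ring | lra].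
    have : 0 < Lf y0 ^+ 2 by rewrite exprn_even_gt0.
    nra.
  have [h [hh hpos]] := @taylor_sign (Lf y0) k1 k2 k3 2%:R hL hcase _ hdl'.
  exists (y0 + h); split; first by rewrite addrC addKr; move: hh; rewrite lt_min => /andP[].
  have hyneg : y0 + h < 0.
    move: hh; rewrite lt_min => /andP[_]; rewrite ltr_norml => /andP[_ h2]; lra.
  rewrite hZT; nra.
Qed.

Lemma zero_pts (hc : 0 < c) (hd : 0 < d) (hb : 0 < be) e : 0 < e ->
  exists x y, [/\ x != 0, Fu (x^+2) y = 0, `|x| < e & `|y - 0| < e].
Proof.
move=> he.
have hK0 : K2f 0 != 0.
  by rewrite /K2f /sf; apply: lt0r_neq0; nra.
have [dl' hdl' H] := near_sign (cont_K2f 0) hK0.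
apply: RL1 => //.
- have -> : Lf 0 = be * d by rewrite /Lf; ring.
  by apply: lt0r_neq0; nra.
- by rewrite /Zf mul0r.
move=> dl hdl.
have hmin : 0 < Num.min dl dl' by rewrite lt_min hdl hdl'.
exists (- (Num.min dl dl' / 2%:R)).
have hle1 : Num.min dl dl' <= dl by rewrite ge_min lexx.
have hle2 : Num.min dl dl' <= dl' by rewrite ge_min lexx orbT.
have hp : 0 < Num.min dl dl' / 2%:R by rewrite divr_gt0 ?ltr0n.
rewrite subr0 normrN gtr0_norm //; split; first by lra.
have := H (- (Num.min dl dl' / 2%:R)); rewrite subr0 normrN gtr0_norm // => /(_ ltac:(lra)) hk.
have hK0p : 0 < K2f 0 by rewrite /K2f /sf; nra.
have hKy : 0 < K2f (- (Num.min dl dl' / 2%:R)).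
  by move: hk; rewrite pmulr_lgt0.
have -> : Lf 0 = be * d by rewrite /Lf; ring.
rewrite /Zf.
have := mulr_gt0 hb hd.
move=> hbd; rewrite !mulNr oppr_lt0; apply: mulr_gt0 => //; exact: mulr_gt0.
Qed.



Lemma norm_split (z : R[i]) e : `|z| < e%:C -> `|Re z| < e /\ `|Im z| < e.
Proof.
rewrite normc_def ltcR => h.
have he : 0 < e by apply: le_lt_trans h; apply: sqrtr_ge0.
have h2 : Re z ^+ 2 + Im z ^+ 2 < e ^+ 2.
  by rewrite -(ltr_sqrt _ (exprn_gt0 2 he)) sqrtr_sqr gtr0_norm.
have := nK (Re z); have := nK (Im z); have := normr_ge0 (Re z); have := normr_ge0 (Im z).
have := sqr_ge0 (Re z); have := sqr_ge0 (Im z).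
move=> *; split; nra.
Qed.

Lemma norm_join (z : R[i]) e : 0 < e -> `|Re z| < e / 2%:R -> `|Im z| < e / 2%:R ->
  `|z| < e%:C.
Proof.
move=> he h1 h2; rewrite normc_def ltcR.
rewrite -[X in _ < X](gtr0_norm he) -sqrtr_sqr ltr_sqrt ?exprn_gt0 //.
have := nK (Re z); have := nK (Im z); have := normr_ge0 (Re z); have := normr_ge0 (Im z).
move=> *; nra.
Qed.

Lemma pts_closure (hd : 0 < d) (w0 : R[i]) :
  (forall e, 0 < e -> exists x y, [/\ x != 0, Fu (x^+2) y = 0,
      `|x - Re w0| < e & `|y - Im w0| < e]) ->
  forall e, 0 < e -> exists w : R[i], (W_beta c d be (Some w) /\ reC w != 0) /\
     `|w - w0| < e%:C.
Proof.
move=> H e he.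
have he2 : 0 < e / 2%:R by rewrite divr_gt0 ?ltr0n.
have [x [y [hx hF h1 h2]]] := H _ he2.
exists (x +i* y); split.
  by split => //; apply: F_to_W.
by apply: norm_join => //; rewrite ?ReD ?ImD ?ReN ?ImN ?ReCx ?ImCx.
Qed.

End Main.

Theorem proposition3p7 (R : realType) (c d beta : R)
  (hc : 0 <= c) (hd : 0 < d) (hbeta : 0 < beta) (z : extC R) :
  extC_closure (minus_iR (W_beta c d beta)) z <->
  (z = None
   \/ (z = Some 0 /\ c != 0)
   \/ (exists w : R[i], z = Some w /\ imC w != 0 /\
        exists s1 s2 : bool,
          (reC w)%:C =
          sgnb R s1 * sqrtc ((Pfun c d beta (imC w))%:C
             + sgnb R s2 * sqrtc ((Pfun c d beta (imC w) ^+ 2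
                                   - Qfun c d beta (imC w))%:C)
             - (imC w ^+ 2)%:C))).
Proof.
case: z => [w0|]; last first.
  by split => _; left => //; exact: I.
rewrite /extC_closure /minus_iR.
split.
- move=> H.
  have Hpt : forall e, 0 < e -> exists x y, [/\ x != 0, Fu c d beta (x^+2) y = 0,
      `|x - complex.Re w0| < e & `|y - complex.Im w0| < e].
    move=> e he; have [w [[hW hx] hn]] := H e he.
    exists (complex.Re w), (complex.Im w).
    have [h1 h2] := norm_split hn; rewrite ReD ReN in h1; rewrite ImD ImN in h2.
    by split => //; apply: W_to_F.
  have hF := closure_F Hpt.
  have [hy0|hy0] := eqVneq (complex.Im w0) 0.
  + have hx0 : complex.Re w0 = 0.
      move: hF; rewrite hy0 (_ : Fu c d beta _ 0 = beta * d * complex.Re w0 ^+ 2); last first.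
        by rewrite /Fu; ring.
      move/eqP; rewrite mulf_eq0 mulf_eq0 (gt_eqF hbeta) (gt_eqF hd) /= sqrf_eq0; by move/eqP.
    right; left; split.
      by congr Some; apply: cplx_eq; rewrite ?hx0 ?hy0.
    apply/negP => /eqP hc0.
    have [e he He] := c0_excl hc0 hd hbeta.
    have [x [y [hx hFx hxe hye]]] := Hpt e he.
    rewrite hx0 subr0 in hxe; rewrite hy0 subr0 in hye.
    by move: (He x y hxe hye hx); rewrite hFx eqxx.
  + right; right; exists w0; split => //; split => //.
    by apply/(form_iff c d beta hy0).
- move=> [//|[[hw hc0]|[w [hw [hy hform]]]]].
  + case: hw => ->.
    apply: pts_closure => // e he.
    have hcp : 0 < c by rewrite lt_neqAle eq_sym hc0 hc.
    have [x [y [hx hF h1 h2]]] := zero_pts hcp hd hbeta he.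
    by exists x, y; split => //; rewrite ?Re0 ?Im0 subr0.
  + case: hw => ->.
    have hFw := (form_iff c d beta hy).1 hform.
    have [hx|hx] := eqVneq (reC w) 0; last first.
      move=> e he; exists w; split => //; first by split => //; apply: F_to_W.
      by rewrite subrr normr0 ltcR.
    apply: pts_closure => // e he.
    have hK : K2f c d beta (imC w) = 0.
      move: hFw; rewrite hx expr0n /= Fu0 /Zf => /eqP; rewrite mulf_eq0 (negbTE hy) /=.
      by move/eqP.
    have [x [y [hx0 hF h1 h2]]] := iR_pts hc hd hbeta he hy hK.
    exists x, y; split => //.
    by move: hx; rewrite /reC => ->; rewrite subr0.
Qed.
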